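(* Fix a sequence of matchings and any non-negative load vector at the end of round $t_1$, and consider a token $i$ located at node $u=w_i^{(t_1)}$ at the end of round $t_1$. Then for any $t_2 \geq t_1$ and any node $v$, $\Pr[ w_i^{(t_2)} = v ] = \mathbf{M}_{u,v}^{[t_1+1,t_2]}$, and more generally, for any set $D \subseteq V$, $\Pr[ w_i^{(t_2)} \in D ] = \mathbf{M}_{u,D}^{[t_1+1,t_2]}$.
   Context: $G=(V,E)$ has $n$ nodes; a matching $\mathbf{M}^{(t)}\subseteq E$ is identified with the symmetric matrix with entries $1/2$ on $(u,u),(v,v),(u,v),(v,u)$ for $\{u,v\}\in\mathbf{M}^{(t)}$, $1$ on the diagonal for unmatched nodes, $0$ elsewhere; $\mathbf{M}^{[a,b]}=\prod_{s=a}^b\mathbf{M}^{(s)}$ (identity if $a>b$), and $\mathbf{M}_{u,D}=\sum_{v\in D}\mathbf{M}_{u,v}$. Token-based description of the discrete protocol: tokens are distinguishable; $x^{(t)}_u$ is the number of tokens at $u$ at the end of round $t$ and $w^{(t)}_i$ is the node holding token $i$. If $u,v$ are matched in round $t$, all $x^{(t-1)}_u+x^{(t-1)}_v$ tokens at $u$ and $v$ are put in an urn; with probability $1/2$ node $u$ draws $\lceil (x^{(t-1)}_u+x^{(t-1)}_v)/2\rceil$ tokens uniformly at random without replacement, otherwise it draws $\lfloor (x^{(t-1)}_u+x^{(t-1)}_v)/2\rfloor$ tokens (independently over matched edges and rounds); $v$ receives the remaining tokens. Unmatched nodes keep their tokens. *)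

(* Defs.v *)
From mathcomp Require Import all_boot all_order all_algebra.
Set Implicit Arguments. Unset Strict Implicit. Unset Printing Implicit Defensive.
Import Order.TTheory GRing.Theory Num.Theory.
Local Open Scope ring_scope.

Definition simple_graph n (G : rel 'I_n) :=
  (forall u v, G u v = G v u) /\ (forall u, ~~ G u u).

(* A matching is encoded by its partner function p: p u = v iff {u,v} is a
   matched edge, and p u = u iff u is unmatched. *)
Definition is_matching n (G : rel 'I_n) (p : {ffun 'I_n -> 'I_n}) :=
  (forall u, p (p u) = u) /\ (forall u, p u != u -> G u (p u)).

Definition match_mx (R : fieldType) n (p : {ffun 'I_n -> 'I_n}) : 'M[R]_n :=
  \matrix_(u, v) (if p u == u then (u == v)%:R
                  else if (v == u) || (v == p u) then 2%:R^-1 else 0).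

(* M^{[a, a+k-1]} = M^(a) * M^(a+1) * ... * M^(a+k-1)  (identity if k = 0) *)
Fixpoint mx_range (R : pzRingType) n (Mf : nat -> 'M[R]_n) (a k : nat) : 'M[R]_n :=
  match k with
  | 0 => 1%:M
  | k'.+1 => mx_range Mf a k' *m Mf (a + k')%N
  end.

Definition mx_set (R : pzRingType) n (A : 'M[R]_n) (u : 'I_n) (D : {set 'I_n}) : R :=
  \sum_(v in D) A u v.

Definition config n m := {ffun 'I_m -> 'I_n}.

(* Probability that the matched edge {u, p u} produces the local outcome
   w -> w': the s tokens on {u, p u} are split so that u receives k of them;
   u draws ceil(s/2) or floor(s/2) tokens with probability 1/2 each, as a
   uniformly random subset of that size (probability 1/'C(s,k) per subset). *)
Definition edge_prob (R : fieldType) n m (p : {ffun 'I_n -> 'I_n})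
    (w w' : config n m) (u : 'I_n) : R :=
  let s := #|[set i | (w i == u) || (w i == p u)]| in
  let k := #|[set i | ((w i == u) || (w i == p u)) && (w' i == u)]| in
  ((k == uphalf s)%:R + (k == s./2)%:R) / 2%:R / ('C(s, k))%:R.

Definition step_kernel (R : fieldType) n m (p : {ffun 'I_n -> 'I_n})
    (w w' : config n m) : R :=
  if [forall i, (w' i == w i) || (w' i == p (w i))]
  then \prod_(u : 'I_n | (val u < val (p u))%N) edge_prob R p w w' u
  else 0.

(* Distribution of the configuration k rounds after round t1, started from
   the configuration w0 at the end of round t1; Ms t is the matching used in
   round t. *)
Fixpoint config_dist (R : fieldType) n m (Ms : nat -> {ffun 'I_n -> 'I_n})
    (t1 k : nat) (w0 : config n m) : {ffun config n m -> R} :=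
  match k with
  | 0 => [ffun w => (w == w0)%:R]
  | k'.+1 => let d := config_dist R Ms t1 k' w0 in
      [ffun w' => \sum_(w : config n m) d w * step_kernel R (Ms (t1 + k'.+1)%N) w w']
  end.

(* Main.v *)
Require Import Defs.
From mathcomp Require Import all_boot all_order all_algebra.
From mathcomp Require Import zify ring lra.
Set Implicit Arguments. Unset Strict Implicit. Unset Printing Implicit Defensive.
Import Order.TTheory GRing.Theory Num.Theory.
Local Open Scope ring_scope.

Section G.
Variable R : realFieldType.

Definition gk (s k : nat) : R :=
  ((k == uphalf s)%:R + (k == s./2)%:R) / 2%:R / ('C(s, k))%:R.

Lemma half_add s : (uphalf s + s./2 = s)%N.
Proof. rewrite uphalf_half -addnA addnn; exact: odd_double_half. Qed.

Lemma sum_ind (s a : nat) : (a <= s)%N -> \sum_(k < s.+1) ((k : nat) == a)%:R = (1 : R).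
Proof.
move=> ha; rewrite (bigD1 (inord a)) //= inordK ?ltnS // eqxx big1 ?addr0 //.
move=> k hk; case: eqP => // ek; move: hk; case/negP.
by apply/eqP; apply: val_inj; rewrite /= inordK // ltnS.
Qed.

Lemma sum_gk_nat s : \sum_(k < s.+1) ('C(s, k))%:R * gk s k = 1.
Proof.
have ->: \sum_(k < s.+1) ('C(s, k))%:R * gk s k =
   (\sum_(k < s.+1) ((k : nat) == uphalf s)%:R + \sum_(k < s.+1) ((k : nat) == s./2)%:R) / 2%:R.
  rewrite -big_split /= big_distrl /=; apply: eq_bigr => k _.
  rewrite /gk mulrC divfK //.
  by rewrite pnatr_eq0 -lt0n bin_gt0 -ltnS ltn_ord.
have h1 := half_add s.
rewrite !sum_ind; first by field.
  all: lia.
Qed.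

Lemma gk_sym s k : (k <= s)%N -> gk s (s - k) = gk s k.
Proof.
move=> hk; rewrite /gk bin_sub //; congr (_ / _ / _).
have h1 := half_add s.
rewrite addrC; congr (_%:R + _%:R); apply/eqP/eqP; lia.
Qed.

Lemma sum_gk_set (T : finType) (B : {set T}) :
  \sum_(Y : {set T} | Y \subset B) gk #|B| #|Y| = 1.
Proof.
rewrite (partition_big (fun Y : {set T} => (inord #|Y| : 'I_(#|B|).+1)) predT) //=.
rewrite -(sum_gk_nat #|B|); apply: eq_bigr => k _.
transitivity (\sum_(Y in [set Y : {set T} | Y \subset B & #|Y| == k]) gk #|B| k).
  apply: eq_big => Y; last first.
    by move=> /andP[hY /eqP <-]; rewrite inordK // ltnS subset_leq_card.
  rewrite inE; case hY: (Y \subset B) => //=.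
  apply/eqP/eqP => [<-|->]; first by rewrite inordK // ltnS subset_leq_card.
  by apply: val_inj; rewrite /= inordK // ltnS -(ltn_ord k) // ltnW.
by rewrite sumr_const cards_draws mulr_natl.
Qed.

Definition sdiff (T : finType) (B Y : {set T}) := (Y :\: B) :|: (B :\: Y).

Lemma sdiffK (T : finType) (B : {set T}) : involutive (sdiff B).
Proof.
move=> Y; apply/setP => x; rewrite /sdiff !inE.
by case: (x \in B); case: (x \in Y).
Qed.

Lemma sum_gk_half (T : finType) (B : {set T}) i : i \in B ->
  \sum_(Y : {set T} | (Y \subset B) && (i \in Y)) gk #|B| #|Y| = 2%:R^-1 /\
  \sum_(Y : {set T} | (Y \subset B) && (i \notin Y)) gk #|B| #|Y| = 2%:R^-1.
Proof.
move=> iB.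
have htot := sum_gk_set B.
rewrite (bigID (fun Y : {set T} => i \in Y)) /= in htot.
set A := \sum_(Y | _) _ in htot; set C := \sum_(Y | _) _ in htot.
have hsub Y : (sdiff B Y \subset B) = (Y \subset B).
  apply/subsetP/subsetP => h x; move: (h x); rewrite /sdiff !inE;
    by case: (x \in B); case: (x \in Y) => //= ->.
have eAC : A = C.
  rewrite /A (reindex_inj (inv_inj (sdiffK B))) /=.
  apply: eq_big => Y.
    by rewrite hsub /sdiff !inE iB; case: (Y \subset B); case: (i \in Y).
  rewrite hsub => /andP[hY _].
  have -> : sdiff B Y = B :\: Y.
    apply/setP => x; rewrite /sdiff !inE; have := subsetP hY x.
    by case: (x \in Y); case: (x \in B) => //= /(_ isT).
  by rewrite cardsD (setIidPr hY) gk_sym // subset_leq_card.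
have h2 : A = 2%:R^-1.
  rewrite -eAC in htot; transitivity ((A + A) / 2%:R); first by field.
  by rewrite htot mul1r.
by split => //; rewrite -/C -eAC.
Qed.
End G.
Section K.
Variables (R : realFieldType) (n m : nat) (p : {ffun 'I_n -> 'I_n}).
Hypothesis hp : forall u, p (p u) = u.
Variable w : config n m.

Definition Ep (u : 'I_n) := (val u < val (p u))%N.
Definition lo (z : 'I_n) := if Ep z then z else p z.
Definition Tu (u : 'I_n) := [set j | (w j == u) || (w j == p u)].
Definition Wf (f : {ffun 'I_n -> {set 'I_m}}) : config n m :=
  [ffun j => if j \in f (lo (w j)) then lo (w j) else p (lo (w j))].
Definition Fw (w' : config n m) : {ffun 'I_n -> {set 'I_m}} :=
  [ffun u => if Ep u then [set j | (lo (w j) == u) && (w' j == u)] else set0].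
Definition valid (w' : config n m) := [forall j, (w' j == w j) || (w' j == p (w j))].
Definition Qp (u : 'I_n) := [pred Y : {set 'I_m} | Y \subset Tu u].

Lemma Ep_neq u : Ep u -> p u != u.
Proof. by rewrite /Ep => h; apply/eqP => e; rewrite e ltnn in h. Qed.

Lemma notEp_lo z : ~~ Ep (lo z) -> p z = z.
Proof.
rewrite /lo /Ep; case: ifP => [->//|]; rewrite hp => h1 h2.
by apply: val_inj; apply/eqP; move: h1 h2; rewrite /Ep; lia.
Qed.

Lemma lo_cases z : (lo z == z) && (p (lo z) == p z) || (lo z == p z) && (p (lo z) == z).
Proof. by rewrite /lo; case: ifP => _; rewrite ?hp !eqxx ?orbT. Qed.

Lemma Ep_lo z (u : 'I_n) : Ep u -> (lo z == u) = (z == u) || (z == p u).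
Proof.
move=> hu; rewrite /lo; case: ifP => hz.
  case: (eqVneq z u) => [//|nzu] /=.
  apply/esym/eqP => e; move: hz hu; rewrite /Ep e hp; lia.
case: (eqVneq z u) => [e|nzu] /=.
  by move: hz; rewrite e hu.
by apply/eqP/eqP => [<-|->]; rewrite hp.
Qed.

Lemma inTu u j : Ep u -> (j \in Tu u) = (lo (w j) == u).
Proof. by move=> hu; rewrite inE Ep_lo. Qed.

Lemma valid_Wf f : valid (Wf f).
Proof.
apply/forallP => j; rewrite ffunE; have := lo_cases (w j).
by case/orP => /andP[/eqP e1 _]; rewrite e1 ?hp; case: ifP; rewrite !eqxx ?orbT.
Qed.

Lemma Fw_pf w' : Fw w' \in pfamily set0 Ep Qp.
Proof.
apply/familyP => u; rewrite ffunE /=; rewrite /in_mem /=.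
case: ifP => hu //=; rewrite /Qp /=; apply/subsetP => j.
by rewrite !inE Ep_lo // => /andP[].
Qed.

Lemma pf_sub f u : f \in pfamily set0 Ep Qp -> Ep u -> f u \subset Tu u.
Proof. by move=> /familyP /(_ u); rewrite /in_mem /= => + hu; rewrite hu. Qed.

Lemma pf_out f u : f \in pfamily set0 Ep Qp -> ~~ Ep u -> f u = set0.
Proof.
by move=> /familyP /(_ u); rewrite /in_mem /= => + hu; rewrite (negbTE hu) => /eqP.
Qed.

Lemma FwK f : f \in pfamily set0 Ep Qp -> Fw (Wf f) = f.
Proof.
move=> hf; apply/ffunP => u; rewrite ffunE; case: ifP => hu; last first.
  by rewrite (pf_out hf) ?hu.
apply/setP => j; rewrite !inE ffunE.
case: (eqVneq (lo (w j)) u) => [e|ne] /=.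
  rewrite e; case: ifP => _; first by rewrite eqxx.
  by rewrite (negbTE (Ep_neq hu)).
apply/esym/negbTE; apply: contra ne => jf.
by rewrite -inTu // (subsetP (pf_sub hf hu)).
Qed.

Lemma WfK w' : valid w' -> Wf (Fw w') = w'.
Proof.
move=> /forallP hv; apply/ffunP => j; rewrite !ffunE; have := hv j.
case: (boolP (Ep (lo (w j)))) => hE.
  rewrite inE eqxx /=; case: (eqVneq (w' j) (lo (w j))) => [//|hn] /=.
  have := lo_cases (w j); case/orP => /andP[/eqP e1 /eqP e2]; rewrite e2.
    by rewrite -e1 (negbTE hn) /= => /eqP.
  by move: hn; rewrite e1 => /negbTE ->; rewrite orbF => /eqP.
have hpz := notEp_lo hE.
rewrite in_set0 hpz orbb => /eqP ->.
have := lo_cases (w j); rewrite hpz orbb => /andP[/eqP -> _].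
by rewrite hpz.
Qed.

Lemma kernel_Wf f : f \in pfamily set0 Ep Qp ->
  step_kernel R p w (Wf f) = \prod_(u | Ep u) gk R #|Tu u| #|f u|.
Proof.
move=> hf; rewrite /step_kernel.
have := valid_Wf f; rewrite /valid => ->.
apply: eq_bigr => u hu.
have hk : #|[set j | ((w j == u) || (w j == p u)) && (Wf f j == u)]| = #|f u|.
  apply: eq_card => j; rewrite !inE -Ep_lo // ffunE.
  case: (eqVneq (lo (w j)) u) => [e|ne] /=.
    rewrite e; case: ifP => _; first by rewrite eqxx.
    by rewrite (negbTE (Ep_neq hu)).
  apply/esym/negbTE; apply: contra ne => jf.
  by rewrite -inTu // (subsetP (pf_sub hf hu)).
rewrite /edge_prob /= hk.
done.
Qed.

Lemma sum_kernel (H : config n m -> R) :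
  \sum_(w' : config n m) step_kernel R p w w' * H w' =
  \sum_(f in pfamily set0 Ep Qp) (\prod_(u | Ep u) gk R #|Tu u| #|f u|) * H (Wf f).
Proof.
rewrite (bigID valid) /= [X in _ + X]big1 ?addr0; last first.
  by move=> w' hv; rewrite /step_kernel -/(valid w') (negbTE hv) mul0r.
rewrite (reindex_onto Wf Fw) /=; last by move=> w' hv; apply: WfK.
apply: eq_big => f.
  rewrite valid_Wf /=; apply/eqP/idP => [<-|hf]; first exact: Fw_pf.
  exact: FwK.
by move=> /andP[_ /eqP e]; rewrite kernel_Wf // -e Fw_pf.
Qed.

Lemma sum_pf_one :
  \sum_(f in pfamily set0 Ep Qp) \prod_(u | Ep u) gk R #|Tu u| #|f u| = 1.
Proof.
rewrite -(big_distr_big_dep set0 Ep Qp (fun u Y => gk R #|Tu u| #|Y|)) big1 // => u _.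
exact: sum_gk_set.
Qed.

Lemma sum_mul_ind (T : finType) (P b : pred T) (F : T -> R) :
  \sum_(x | P x) F x * (b x)%:R = \sum_(x | P x && b x) F x.
Proof.
rewrite big_mkcondr /=; apply: eq_bigr => x _.
by case: (b x); rewrite ?mulr1 ?mulr0.
Qed.

Lemma key (i : 'I_m) (v : 'I_n) :
  \sum_(w' : config n m | w' i == v) step_kernel R p w w' = match_mx R p (w i) v.
Proof.
have -> : \sum_(w' : config n m | w' i == v) step_kernel R p w w' =
   \sum_(w' : config n m) step_kernel R p w w' * (w' i == v)%:R.
  by rewrite sum_mul_ind.
rewrite sum_kernel mxE.
case: (boolP (Ep (lo (w i)))) => hE; last first.
  have hpz := notEp_lo hE.
  have hlo : lo (w i) = w i.
    by have := lo_cases (w i); rewrite hpz orbb => /andP[/eqP -> _].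
  rewrite hpz eqxx.
  transitivity (\sum_(f in pfamily set0 Ep Qp)
       (\prod_(u | Ep u) gk R #|Tu u| #|f u|) * (w i == v)%:R).
    apply: eq_bigr => f _; congr (_ * _%:R); rewrite ffunE hlo hpz.
    by rewrite if_same.
  by rewrite -big_distrl /= sum_pf_one mul1r.
set u0 := lo (w i).
pose h u (Y : {set 'I_m}) := gk R #|Tu u| #|Y| *
   (if u == u0 then ((if i \in Y then u0 else p u0) == v)%:R else 1).
transitivity (\sum_(f in pfamily set0 Ep Qp) \prod_(u | Ep u) h u (f u)).
  apply: eq_bigr => f _; rewrite /h [RHS]big_split /=; congr (_ * _).
  rewrite (bigD1 u0) //= eqxx big1 ?mulr1; first by rewrite ffunE.
  by move=> u /andP[_ /negbTE ->].
rewrite -(big_distr_big_dep set0 Ep Qp h) (bigD1 u0) //= [X in _ * X]big1 ?mulr1; last first.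
  move=> u /andP[_ hu]; rewrite /h (negbTE hu).
  under eq_bigr do rewrite mulr1.
  exact: sum_gk_set.
have iT : i \in Tu u0 by rewrite inTu // eqxx.
have [hA hB] := sum_gk_half R iT.
have hne := Ep_neq hE.
have hset : ((v == w i) || (v == p (w i))) = ((v == u0) || (v == p u0)).
  rewrite /u0; have := lo_cases (w i).
  by case/orP => /andP[/eqP e1 _]; rewrite e1 ?hp // orbC.
have hpw : (p (w i) == w i) = false.
  apply/negbTE; apply: contra hne => /eqP e.
  rewrite /u0 /lo; case: ifP => _; rewrite ?e //.
rewrite hpw hset /h eqxx.
case: (eqVneq v u0) => [->|nv0] /=.
  rewrite -hA -sum_mul_ind; apply: eq_bigr => Y _.
  by case: (i \in Y); rewrite ?eqxx // (negbTE hne).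
case: (eqVneq v (p u0)) => [->|nv1] /=.
  rewrite -hB -sum_mul_ind; apply: eq_bigr => Y _.
  by case: (i \in Y); rewrite ?eqxx // eq_sym (negbTE hne).
rewrite big1 // => Y _.
by case: (i \in Y); rewrite eq_sym ?(negbTE nv0) ?(negbTE nv1) mulr0.
Qed.
End K.

Theorem lemma3p1 (R : realFieldType) (n m : nat) (G : rel 'I_n)
    (Ms : nat -> {ffun 'I_n -> 'I_n}) (t1 t2 : nat) (w0 : config n m)
    (i : 'I_m) :
  simple_graph G ->
  (forall t, is_matching G (Ms t)) ->
  (t1 <= t2)%N ->
  let u := w0 i in
  let P := config_dist R Ms t1 (t2 - t1) w0 in
  let MM := mx_range (fun s => match_mx R (Ms s)) t1.+1 (t2 - t1) in
  (forall v : 'I_n, \sum_(w : config n m | w i == v) P w = MM u v) /\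
  (forall D : {set 'I_n}, \sum_(w : config n m | w i \in D) P w = mx_set MM u D).
Proof.
move=> _ hM _ u P MM.
have hp t : forall x, Ms t (Ms t x) = x by move=> x; case: (hM t) => h _; exact: h.
have H1 : forall v, \sum_(w : config n m | w i == v) P w = MM u v.
  rewrite /P /MM /u; elim: (t2 - t1)%N => [|k IH] v /=.
    rewrite mxE.
    transitivity (\sum_(w : config n m) (w == w0)%:R * (w i == v)%:R :> R).
      by rewrite sum_mul_ind; apply: eq_bigr => w _; rewrite ffunE.
    rewrite (bigD1 w0) //= eqxx mul1r big1 ?addr0 // => w /negbTE ->.
    by rewrite mul0r.
  transitivity (\sum_(w : config n m) config_dist R Ms t1 k w0 w *
                  match_mx R (Ms (t1 + k.+1)%N) (w i) v).
    under eq_bigr do rewrite ffunE.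
    rewrite exchange_big /=; apply: eq_bigr => w _.
    by rewrite -big_distrr /= key.
  rewrite mxE (partition_big (fun w : config n m => w i) predT) //=.
  apply: eq_bigr => x _; rewrite -IH big_distrl /=.
  rewrite addSnnS; apply: eq_bigr => w /eqP ->; done.
split => // D.
rewrite /mx_set (partition_big (fun w : config n m => w i) (mem D)) //=.
apply: eq_bigr => v vD; rewrite -H1; apply: eq_bigl => w.
by case: (eqVneq (w i) v) => [->|]; rewrite ?vD ?andbF ?andbT.
Qed.
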